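(* Let $c\in\mathbb{R}\setminus\{0\}$ and let $\mathbf f_c:\mathbb{R}^2\to\mathbb{R}^2$ be $$\mathbf f_c(u,v)=\bigl(3v^2-3u^2-2cu,\ 6uv-2cv\bigr).$$ Let $\mathbf s=(s_1,s_2)$ be a point such that $\mathbf f_c(\mathbf x)=\mathbf s$ has exactly four distinct solutions $\mathbf x_i=(u_i,v_i)\in\mathbb{R}^2$, $i=1,\dots,4$, each with $\det(\mathrm{Jac}\,\mathbf f_c)(\mathbf x_i)\neq0$. Then, with $\mathfrak M_i=1/\det(\mathrm{Jac}\,\mathbf f_c)(\mathbf x_i)=\frac{1}{4c^2-36(u_i^2+v_i^2)}$, $$\mathfrak M_1+\mathfrak M_2+\mathfrak M_3+\mathfrak M_4=0.$$
   Context: $\mathbf f_c$ is the generic local form of a one-parameter family of maps between planes near an elliptic umbilic singularity; it is induced by the family of functions $F_{c,\mathbf s}(u,v)=s_1u+s_2v+c(u^2+v^2)+u^3-3uv^2$. The points $\mathbf s$ with four preimages form the four-image region bounded by the (three-cusped) caustic of $\mathbf f_c$. *)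

(* Defs.v *)
From Stdlib Require Import Reals Lra.
Open Scope R_scope.

Definition fc (c : R) (x : R * R) : R * R :=
  let (u, v) := x in
  (3 * v ^ 2 - 3 * u ^ 2 - 2 * c * u, 6 * u * v - 2 * c * v).

(* Entries of the Jacobian matrix of f_c at (u,v):
   [ d f1/du  d f1/dv ]   [ -6u - 2c     6v     ]
   [ d f2/du  d f2/dv ] = [    6v      6u - 2c  ] *)
Definition jac11 (c u v : R) : R := -6 * u - 2 * c.
Definition jac12 (c u v : R) : R := 6 * v.
Definition jac21 (c u v : R) : R := 6 * v.
Definition jac22 (c u v : R) : R := 6 * u - 2 * c.

Definition jac_det (c : R) (x : R * R) : R :=
  let (u, v) := x in
  jac11 c u v * jac22 c u v - jac12 c u v * jac21 c u v.

(* Main.v *)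
Require Import Defs.
From Stdlib Require Import Reals Lra.
Open Scope R_scope.

Definition C := (R * R)%type.
Definition Cp (a b : C) : C := (fst a + fst b, snd a + snd b).
Definition Cm (a b : C) : C := (fst a * fst b - snd a * snd b, fst a * snd b + snd a * fst b).
Definition Cs (a b : C) : C := (fst a - fst b, snd a - snd b).
Definition Cr (r : R) : C := (r, 0).
Infix "+c" := Cp (at level 50, left associativity).
Infix "-c" := Cs (at level 50, left associativity).
Infix "*c" := Cm (at level 40, left associativity).

Ltac cring := repeat match goal with x : C |- _ => destruct x end;
  unfold Cp, Cm, Cs, Cr; simpl; f_equal; ring.

Definition p (A B K z : C) := Cr 27 *c (z *c z *c z *c z) +c A *c (z *c z) +c B *c z +c K.
Definition dp (A B z : C) := Cr 108 *c (z *c z *c z) +c Cr 2 *c A *c z +c B.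
Definition q1 (A B a b : C) :=
  Cr 27 *c (a*c a*c a +c a*c a*c b +c a*c b*c b +c b*c b*c b) +c A *c (a +c b) +c B.
Definition q2 (A a b c : C) :=
  Cr 27 *c (a*c a +c b*c b +c c*c c +c a*c b +c a*c c +c b*c c) +c A.

Lemma Cint (a b : C) : a *c b = (0,0) -> a <> (0,0) -> b = (0,0).
Proof.
  destruct a as [a1 a2], b as [b1 b2]; unfold Cm; simpl; intros H Hn.
  injection H as H1 H2.
  assert (Hp : a1*a1 + a2*a2 > 0).
  { destruct (Req_dec a1 0); destruct (Req_dec a2 0); subst.
    - exfalso; apply Hn; reflexivity.
    - pose proof (Rsqr_pos_lt a2 H0); unfold Rsqr in *; nra.
    - pose proof (Rsqr_pos_lt a1 H); unfold Rsqr in *; nra.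
    - pose proof (Rsqr_pos_lt a1 H); unfold Rsqr in *; nra. }
  assert (E1 : b1 * (a1*a1+a2*a2) = a1*(a1*b1-a2*b2) + a2*(a1*b2+a2*b1)) by ring.
  assert (E2 : b2 * (a1*a1+a2*a2) = a1*(a1*b2+a2*b1) - a2*(a1*b1-a2*b2)) by ring.
  rewrite H1, H2 in E1, E2. rewrite Rmult_0_r, Rmult_0_r, Rplus_0_r in E1.
  rewrite Rmult_0_r, Rmult_0_r, Rminus_0_r in E2.
  apply Rmult_integral in E1; apply Rmult_integral in E2.
  destruct E1; [|lra]; destruct E2; [|lra]; subst; reflexivity.
Qed.

Lemma Cs_nz (a b : C) : a <> b -> a -c b <> (0,0).
Proof.
  destruct a, b; unfold Cs; simpl; intros H E; injection E as E1 E2; apply H; f_equal; lra.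
Qed.

Lemma z0 : (0,0) -c (0,0) = ((0,0) : C).
Proof. unfold Cs; simpl; f_equal; ring. Qed.

Lemma L1 A B K a b : p A B K a = (0,0) -> p A B K b = (0,0) -> a <> b -> q1 A B a b = (0,0).
Proof.
  intros Ha Hb Hab.
  assert (E : (a -c b) *c q1 A B a b = p A B K a -c p A B K b) by (unfold p, q1; cring).
  rewrite Ha, Hb, z0 in E. eapply Cint; [exact E| apply Cs_nz; auto].
Qed.

Lemma L2 A B a b c : q1 A B a b = (0,0) -> q1 A B a c = (0,0) -> b <> c -> q2 A a b c = (0,0).
Proof.
  intros Ha Hb Hab.
  assert (E : (b -c c) *c q2 A a b c = q1 A B a b -c q1 A B a c) by (unfold q2, q1; cring).
  rewrite Ha, Hb, z0 in E. eapply Cint; [exact E| apply Cs_nz; auto].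
Qed.

Lemma L3 A a b c d : q2 A a b c = (0,0) -> q2 A a b d = (0,0) -> c <> d -> d = (0,0) -c a -c b -c c.
Proof.
  intros Ha Hb Hab.
  assert (E : (c -c d) *c (Cr 27 *c (a +c b +c c +c d)) = q2 A a b c -c q2 A a b d) by (unfold q2; cring).
  rewrite Ha, Hb, z0 in E. apply Cint in E; [| apply Cs_nz; auto].
  apply Cint in E; [| unfold Cr; intro X; injection X; lra].
  destruct a, b, c, d; unfold Cp, Cs in *; simpl in *; injection E as E1 E2; f_equal; lra.
Qed.

Lemma Lfin A B a b c : q1 A B a b = (0,0) -> q2 A a b c = (0,0) ->
  dp A B a = Cr 27 *c ((a -c b) *c (a -c c) *c (a -c ((0,0) -c a -c b -c c))).
Proof.
  intros H1 H2.
  assert (E : dp A B a = Cr 27 *c ((a -c b) *c (a -c c) *c (a -c ((0,0) -c a -c b -c c)))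
     +c q1 A B a b +c (a -c b) *c q2 A a b c) by (unfold dp, q1, q2; cring).
  rewrite H1, H2 in E. rewrite E. cring.
Qed.

Lemma Lall A B K a b c d : p A B K a = (0,0) -> p A B K b = (0,0) ->
  p A B K c = (0,0) -> p A B K d = (0,0) ->
  a <> b -> a <> c -> a <> d -> b <> c -> b <> d -> c <> d ->
  dp A B a = Cr 27 *c ((a -c b) *c (a -c c) *c (a -c d)).
Proof.
  intros Ha Hb Hc Hd ? ? ? ? ? ?.
  assert (Q1 := L1 _ _ _ _ _ Ha Hb ltac:(auto)).
  assert (Q2 := L1 _ _ _ _ _ Ha Hc ltac:(auto)).
  assert (Q3 := L1 _ _ _ _ _ Ha Hd ltac:(auto)).
  assert (R1 := L2 _ _ _ _ _ Q1 Q2 ltac:(auto)).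
  assert (R2 := L2 _ _ _ _ _ Q1 Q3 ltac:(auto)).
  assert (Ed := L3 _ _ _ _ _ R1 R2 ltac:(auto)).
  rewrite Ed. apply Lfin; auto.
Qed.

Definition Af (s : R * R) : C := (18 * fst s, -18 * snd s).
Definition Bf (c : R) : C := (8 * c^3, 0).
Definition Kf (c : R) (s : R*R) : C :=
  (3 * (fst s ^2 - snd s ^2) + 4 * c^2 * fst s, -6 * fst s * snd s + 4 * c^2 * snd s).

Lemma Lpt c s x : fc c x = s -> p (Af s) (Bf c) (Kf c s) x = (0,0) /\
  dp (Af s) (Bf c) x = (2 * c * jac_det c x, 0).
Proof.
  destruct x as [u v], s as [s1 s2]; unfold fc; intro H; injection H as H1 H2.
  subst s1 s2. unfold p, dp, Af, Bf, Kf, jac_det, jac11, jac12, jac21, jac22,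
    Cp, Cm, Cr; simpl; split; f_equal; ring.
Qed.

Lemma Lsum (k j1 j2 j3 j4 : R) (a b c d : C) : k <> 0 ->
  (k * j1, 0) = Cr 27 *c ((a -c b) *c (a -c c) *c (a -c d)) ->
  (k * j2, 0) = Cr 27 *c ((b -c a) *c (b -c c) *c (b -c d)) ->
  (k * j3, 0) = Cr 27 *c ((c -c a) *c (c -c b) *c (c -c d)) ->
  (k * j4, 0) = Cr 27 *c ((d -c a) *c (d -c b) *c (d -c c)) ->
  j2*j3*j4 + j1*j3*j4 + j1*j2*j4 + j1*j2*j3 = 0.
Proof.
  intros Hk H1 H2 H3 H4.
  assert (Z : (Cr 27 *c ((b -c a) *c (b -c c) *c (b -c d))) *c
              (Cr 27 *c ((c -c a) *c (c -c b) *c (c -c d))) *c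
              (Cr 27 *c ((d -c a) *c (d -c b) *c (d -c c))) +c
              (Cr 27 *c ((a -c b) *c (a -c c) *c (a -c d))) *c
              (Cr 27 *c ((c -c a) *c (c -c b) *c (c -c d))) *c
              (Cr 27 *c ((d -c a) *c (d -c b) *c (d -c c))) +c
              (Cr 27 *c ((a -c b) *c (a -c c) *c (a -c d))) *c
              (Cr 27 *c ((b -c a) *c (b -c c) *c (b -c d))) *c
              (Cr 27 *c ((d -c a) *c (d -c b) *c (d -c c))) +c
              (Cr 27 *c ((a -c b) *c (a -c c) *c (a -c d))) *c
              (Cr 27 *c ((b -c a) *c (b -c c) *c (b -c d))) *c
              (Cr 27 *c ((c -c a) *c (c -c b) *c (c -c d))) = (0,0)) by cring.
  rewrite <- H1, <- H2, <- H3, <- H4 in Z.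
  unfold Cp, Cm in Z; simpl in Z. injection Z as Z1 Z2.
  assert (F : k^3 * (j2*j3*j4 + j1*j3*j4 + j1*j2*j4 + j1*j2*j3) = 0) by (rewrite <- Z1; ring).
  apply Rmult_integral in F; destruct F as [F|F]; auto.
  exfalso; exact (pow_nonzero k 3 Hk F).
Qed.

Theorem theorem1 (c : R) (s : R * R) (x1 x2 x3 x4 : R * R) :
  c <> 0 ->
  (* x1..x4 are pairwise distinct *)
  x1 <> x2 -> x1 <> x3 -> x1 <> x4 -> x2 <> x3 -> x2 <> x4 -> x3 <> x4 ->
  (* they solve f_c(x) = s *)
  fc c x1 = s -> fc c x2 = s -> fc c x3 = s -> fc c x4 = s ->
  (* and they are all the solutions *)
  (forall x : R * R, fc c x = s -> x = x1 \/ x = x2 \/ x = x3 \/ x = x4) ->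
  (* nondegenerate Jacobian at each *)
  jac_det c x1 <> 0 -> jac_det c x2 <> 0 -> jac_det c x3 <> 0 -> jac_det c x4 <> 0 ->
  / jac_det c x1 + / jac_det c x2 + / jac_det c x3 + / jac_det c x4 = 0.
Proof.
  intros Hc d12 d13 d14 d23 d24 d34 F1 F2 F3 F4 _ J1 J2 J3 J4.
  destruct (Lpt _ _ _ F1) as [P1 D1].
  destruct (Lpt _ _ _ F2) as [P2 D2].
  destruct (Lpt _ _ _ F3) as [P3 D3].
  destruct (Lpt _ _ _ F4) as [P4 D4].
  assert (E1 := Lall _ _ _ _ _ _ _ P1 P2 P3 P4 d12 d13 d14 d23 d24 d34).
  assert (E2 := Lall _ _ _ _ _ _ _ P2 P1 P3 P4 (not_eq_sym d12) d23 d24 d13 d14 d34).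
  assert (E3 := Lall _ _ _ _ _ _ _ P3 P1 P2 P4 (not_eq_sym d13) (not_eq_sym d23) d34 d12 d14 d24).
  assert (E4 := Lall _ _ _ _ _ _ _ P4 P1 P2 P3 (not_eq_sym d14) (not_eq_sym d24) (not_eq_sym d34) d12 d13 d23).
  rewrite D1 in E1; rewrite D2 in E2; rewrite D3 in E3; rewrite D4 in E4.
  assert (S := Lsum (2 * c) _ _ _ _ _ _ _ _ ltac:(lra) E1 E2 E3 E4).
  set (j1 := jac_det c x1) in *; set (j2 := jac_det c x2) in *;
  set (j3 := jac_det c x3) in *; set (j4 := jac_det c x4) in *.
  assert (Eq : /j1 + /j2 + /j3 + /j4 =
    (j2*j3*j4 + j1*j3*j4 + j1*j2*j4 + j1*j2*j3) / (j1*j2*j3*j4)) by (field; auto).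
  rewrite Eq, S. unfold Rdiv; ring.
Qed.
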